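(* Let $\Sigma_1$, $\Sigma_2$ be real, symmetric, positive definite $d\times d$ matrices and let $\varepsilon>0$. Then the unique symmetric, positive definite solution $X$ of the matrix equation $$X\Sigma_1X+\tfrac{\varepsilon}{2}X=\Sigma_2$$ is $$X_\varepsilon=\Sigma_1^{-1/2}\big(\Sigma_1^{1/2}\Sigma_2\Sigma_1^{1/2}+(\tfrac{\varepsilon}{4})^2 I_d\big)^{1/2}\Sigma_1^{-1/2}-\tfrac{\varepsilon}{4}\Sigma_1^{-1}.$$ Furthermore, the $2d\times 2d$ matrix $$\Sigma_\varepsilon=\begin{bmatrix}\Sigma_1 & \Sigma_1X_\varepsilon\\ X_\varepsilon\Sigma_1 & \Sigma_2\end{bmatrix}$$ is real, symmetric and positive definite, and $$\Sigma_\varepsilon^{-1}=\begin{bmatrix}\Sigma_1^{-1}+\frac{2}{\varepsilon}X_\varepsilon & -\frac{2}{\varepsilon}I_d\\ -\frac{2}{\varepsilon}I_d & \frac{2}{\varepsilon}X_\varepsilon^{-1}\end{bmatrix}.$$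
   Context: $A^{1/2}$ denotes the unique symmetric positive definite square root of a symmetric positive definite matrix $A$; $I_d$ is the $d\times d$ identity matrix. *)

(* Defs.v *)
From HB Require Import structures.
From mathcomp Require Import all_boot all_order all_algebra.
From mathcomp Require Import boolp classical_sets reals.
Set Implicit Arguments. Unset Strict Implicit. Unset Printing Implicit Defensive.
Import Order.TTheory GRing.Theory Num.Theory.
Local Open Scope ring_scope.

Definition symmx (R : realType) (n : nat) (A : 'M[R]_n) : Prop := A^T = A.

Definition spd (R : realType) (n : nat) (A : 'M[R]_n) : Prop :=
  symmx A /\ forall v : 'cV[R]_n, v != 0 -> 0 < (v^T *m A *m v) 0 0.

(* A^{1/2}: the (unique) symmetric positive definite S with S S = A,
   chosen by classical choice; 0 if none exists (never happens for spd A). *)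
Definition sqrtmx (R : realType) (n : nat) (A : 'M[R]_n) : 'M[R]_n :=
  xget 0 [set S : 'M[R]_n | spd S /\ S *m S = A].

Definition Xeps (R : realType) (d : nat) (S1 S2 : 'M[R]_d) (eps : R) : 'M[R]_d :=
  invmx (sqrtmx S1) *m
    sqrtmx (sqrtmx S1 *m S2 *m sqrtmx S1 + (eps / 4) ^+ 2 *: 1%:M)
  *m invmx (sqrtmx S1) - (eps / 4) *: invmx S1.

Definition Sigeps (R : realType) (d : nat) (S1 S2 : 'M[R]_d) (eps : R)
  : 'M[R]_(d + d) :=
  block_mx S1 (S1 *m Xeps S1 S2 eps) (Xeps S1 S2 eps *m S1) S2.

(* Main.v *)
Require Import Defs.
From HB Require Import structures.
From mathcomp Require Import all_boot all_order all_algebra.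
From mathcomp Require Import boolp classical_sets reals.
From mathcomp Require Import complex spectral.
From mathcomp Require Import lra ring.
Import Order.TTheory GRing.Theory Num.Theory.
Local Open Scope ring_scope.

Section Lib.
Variable R : realType.

Lemma Re_sum n (f : 'I_n -> R[i]) : complex.Re (\sum_i f i) = \sum_i complex.Re (f i).
Proof.
apply: (big_morph (@complex.Re R)) => //.
by move=> [a b] [c d].
Qed.

Lemma Im_sum n (f : 'I_n -> R[i]) : complex.Im (\sum_i f i) = \sum_i complex.Im (f i).
Proof.
apply: (big_morph (@complex.Im R)) => //.
by move=> [a b] [c d].
Qed.

Lemma normsq_rv n (u : 'rV[R]_n) : (u *m u^T) 0 0 = \sum_j u 0 j ^+ 2.
Proof. by rewrite mxE; apply: eq_bigr => j _; rewrite mxE expr2. Qed.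

Lemma normsq_ge0 n (u : 'rV[R]_n) : 0 <= (u *m u^T) 0 0.
Proof. by rewrite normsq_rv sumr_ge0 // => j _; rewrite sqr_ge0. Qed.

Lemma normsq_eq0 n (u : 'rV[R]_n) : ((u *m u^T) 0 0 == 0) = (u == 0).
Proof.
rewrite normsq_rv psumr_eq0; last by move=> j _; rewrite sqr_ge0.
apply/idP/idP => [/allP H|/eqP ->].
2: by apply/allP => j _; rewrite mxE expr2 mulr0 eqxx.
apply/eqP/rowP => j; rewrite mxE; apply/eqP; rewrite -sqrf_eq0.
by have := H j (mem_index_enum j).
Qed.


Lemma scal11 n (u v : 'rV[R]_n) (A : 'M[R]_n) : A^T = A ->
  (u *m A *m v^T) 0 0 = (v *m A *m u^T) 0 0.
Proof.
move=> sA; have := congr1 (fun M : 'M[R]_1 => M 0 0) (trmx_mul (u *m A) v^T).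
by rewrite mxE trmxK trmx_mul sA mulmxA => ->.
Qed.

Lemma real_eigen n (A : 'M[R]_n.+1) : A^T = A ->
  exists a : R, exists u : 'rV_n.+1, u != 0 /\ u *m A = a *: u.
Proof.
move=> sA.
pose Ac := map_mx (real_complex R) A.
have [a] := @eigenvalue_closed _ _ Ac (ltn0Sn n).
move=> /eigenvalueP [v vA vN0].
pose va := map_mx (@complex.Re R) v.
pose vb := map_mx (@complex.Im R) v.
have e1 : va *m A = complex.Re a *: va - complex.Im a *: vb.
  apply/rowP => j; have := congr1 (fun M : 'rV__ => complex.Re (M 0 j)) vA.
  rewrite /= !mxE Re_sum => E.
  transitivity (\sum_i complex.Re (v 0 i * Ac i j)).
    by apply: eq_bigr => k _; rewrite !mxE; case: (v 0 k) => s t /=; rewrite mulr0 subr0.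
  rewrite E; case: (a) => x y; case: (v 0 j) => p q /=; by [].
have e2 : vb *m A = complex.Im a *: va + complex.Re a *: vb.
  apply/rowP => j; have := congr1 (fun M : 'rV__ => complex.Im (M 0 j)) vA.
  rewrite /= !mxE Im_sum => E.
  transitivity (\sum_i complex.Im (v 0 i * Ac i j)).
    by apply: eq_bigr => k _; rewrite !mxE; case: (v 0 k) => s t /=; rewrite mulr0 add0r.
  rewrite E; case: (a) => x y; case: (v 0 j) => p q /=; by rewrite addrC.
have sym1 : forall u w : 'rV[R]_n.+1, (u *m w^T) 0 0 = (w *m u^T) 0 0.
  by move=> u w; have := @scal11 _ u w 1%:M (trmx1 _ _); rewrite !mulmx1.
have key : complex.Im a * ((va *m va^T) 0 0 + (vb *m vb^T) 0 0) = 0.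
  have := @scal11 _ va vb A sA; rewrite e1 e2 !mulmxDl !mulNmx -!scalemxAl.
  have := sym1 vb va.
  set P := va *m vb^T; set Q := vb *m vb^T; set P' := vb *m va^T; set Z := va *m va^T.
  move=> HP; clearbody P Q P' Z; rewrite !mxE HP => H; lra.
have vab : ~ (va = 0 /\ vb = 0).
  move=> [Ha Hb]; move/eqP: vN0; apply; apply/rowP => j.
  have := congr1 (fun M : 'rV__ => M 0 j) Ha; have := congr1 (fun M : 'rV__ => M 0 j) Hb.
  rewrite /va /vb !mxE; case: (v 0 j) => p q /= -> ->; by [].
have b0 : complex.Im a = 0.
  move: key => /eqP; rewrite mulf_eq0 => /orP [/eqP //|].
  rewrite paddr_eq0 ?normsq_ge0 // !normsq_eq0 => /andP [/eqP ? /eqP ?]; by exfalso; apply: vab.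
have [va0|vaN0] := eqVneq va 0.
  have vbN0 : vb != 0 by apply/eqP => vb0; apply: vab.
  exists (complex.Re a), vb; split => //; by rewrite e2 b0 scale0r add0r.
exists (complex.Re a), va; split => //; by rewrite e1 b0 scale0r subr0.
Qed.
Lemma mul_e0T n (u : 'rV[R]_n.+1) : (u *m (delta_mx 0 0 : 'rV_n.+1)^T) 0 0 = u 0 0.
Proof. by rewrite trmx_delta -colE mxE. Qed.

Lemma entryB m n (A B : 'M[R]_(m, n)) i j : (A - B) i j = A i j - B i j.
Proof. by rewrite !mxE. Qed.
Lemma entryD m n (A B : 'M[R]_(m, n)) i j : (A + B) i j = A i j + B i j.
Proof. by rewrite !mxE. Qed.
Lemma entryZ m n (a : R) (A : 'M[R]_(m, n)) i j : (a *: A) i j = a * A i j.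
Proof. by rewrite !mxE. Qed.
Lemma entryN m n (A : 'M[R]_(m, n)) i j : (- A) i j = - A i j.
Proof. by rewrite !mxE. Qed.

Lemma mx11E (M : 'M[R]_1) : M = (M 0 0)%:M.
Proof. exact: mx11_scalar. Qed.

Lemma house n (u : 'rV[R]_n.+1) : (u *m u^T) 0 0 = 1 ->
  exists H : 'M[R]_n.+1, H *m H^T = 1%:M /\ row 0 H = u.
Proof.
move=> u1.
pose e : 'rV[R]_n.+1 := delta_mx 0 0.
have e00 : e 0 0 = 1 by rewrite mxE !eqxx.
pose w := u - e.
have [w0|wN0] := eqVneq w 0.
  exists 1%:M; split; first by rewrite trmx1 mulmx1.
  by rewrite rowE; move/eqP: w0; rewrite subr_eq0 => /eqP ->; rewrite mulmx1.
pose c := (w *m w^T) 0 0.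
have ue : (u *m e^T) 0 0 = u 0 0 by apply: mul_e0T.
have eu : (e *m u^T) 0 0 = u 0 0.
  have -> : (e *m u^T) 0 0 = (e *m u^T)^T 0 0 by rewrite [RHS]mxE.
  by rewrite trmx_mul trmxK ue.
have ee : (e *m e^T) 0 0 = 1 by rewrite mul_e0T e00.
have cE : c = 2 - 2 * u 0 0.
  rewrite /c /w linearB /= mulmxBl !mulmxBr !entryB ue eu ee u1.
  by ring.
have cN0 : c != 0 by rewrite /c normsq_eq0.
pose W := w^T *m w.
pose k := 2 / c.
have WT : W^T = W by rewrite /W trmx_mul trmxK.
have WW : W *m W = c *: W.
  by rewrite /W mulmxA -(mulmxA w^T) [w *m w^T]mx11E mul_mx_scalar -scalemxAl.
pose H := 1%:M - k *: W.
have HT : H^T = H by rewrite /H linearB /= linearZ /= trmx1 WT.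
exists H; split.
  rewrite HT /H mulmxBl !mulmxBr mul1mx mulmx1 -!scalemxAl -!scalemxAr WW scalerA.
  have kk : (k * k) *: (c *: W) = k *: W + k *: W.
    by rewrite scalerA -scalerDl; congr (_ *: _); rewrite /k; field.
  by rewrite mul1mx kk opprB addrK subrK.
have -> : row 0 H = e - k *: (e *m w^T *m w) by rewrite rowE /H mulmxBr mulmx1 -scalemxAr mulmxA.
have ew : (e *m w^T) 0 0 = u 0 0 - 1 by rewrite /w linearB /= mulmxBr entryB eu ee.
rewrite [e *m w^T]mx11E ew mul_scalar_mx scalerA.
have -> : k * (u 0 0 - 1) = -1 by rewrite /k cE; field; move: cN0; rewrite cE.
by rewrite scaleN1r opprK /w addrC subrK.
Qed.
End Lib.

Section Spec.
Variable R : realType.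

Lemma spectral n (A : 'M[R]_n) : A^T = A ->
  exists Q : 'M_n, exists D : 'rV_n, Q *m Q^T = 1%:M /\ A = Q^T *m diag_mx D *m Q.
Proof.
elim: n A => [|n IH] A sA.
  by exists 1%:M, 0; split; [rewrite trmx1 mulmx1 | rewrite [A]flatmx0 [RHS]flatmx0].
have [a [u [uN0 uA]]] := @real_eigen R n A sA.
pose N := (u *m u^T) 0 0.
have N0 : 0 < N by rewrite lt_def normsq_eq0 uN0 normsq_ge0.
pose s := Num.sqrt N.
have s0 : 0 < s by rewrite sqrtr_gt0.
pose u' := s^-1 *: u.
have u'1 : (u' *m u'^T) 0 0 = 1.
  rewrite /u' linearZ /= -scalemxAl -scalemxAr !entryZ -/N.
  have : s ^+ 2 = N by rewrite sqr_sqrtr // ltW.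
  move=> <-; field; by rewrite gt_eqF.
have u'A : u' *m A = a *: u' by rewrite /u' -scalemxAl uA !scalerA mulrC.
have [H [HH rowH]] := @house R n u' u'1.
have HtH : H^T *m H = 1%:M by apply: mulmx1C.
pose B : 'M[R]_(1 + n) := H *m A *m H^T.
have BT : B^T = B by rewrite /B !trmx_mul trmxK sA mulmxA.
have rowB : row 0 B = a *: row 0 (1%:M : 'M[R]_(1 + n)).
  by rewrite /B !row_mul rowH u'A -scalemxAl -rowH -row_mul HH.
have rB : forall j, B 0 j = a * (1%:M : 'M[R]_(1 + n)) 0 j.
  by move=> j; have := congr1 (fun M : 'rV__ => M 0 j) rowB; rewrite !mxE.
have ul : ulsubmx B = a%:M.
  apply/matrixP => i j; rewrite !ord1 [LHS]mxE [LHS]mxE.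
  have -> : lshift n (0 : 'I_1) = 0 by apply: val_inj.
  by rewrite rB !mxE eqxx mulr1n mulr1.
have ur : ursubmx B = 0.
  apply/matrixP => i j; rewrite !ord1 [LHS]mxE [LHS]mxE.
  have -> : lshift n (0 : 'I_1) = 0 by apply: val_inj.
  by rewrite rB !mxE eqE /= mulr0n mulr0.
have dl : dlsubmx B = 0 by rewrite -BT -trmx_ursub ur trmx0.
pose A' := drsubmx B.
have sA' : A'^T = A' by rewrite /A' trmx_drsub BT.
have [Q' [D' [QQ' AQ']]] := IH A' sA'.
pose K : 'M[R]_(1 + n) := block_mx 1%:M 0 0 Q'.
have KK : K *m K^T = 1%:M.
  rewrite /K tr_block_mx mulmx_block !trmx0 trmx1 ?mulmx0 ?mul0mx ?mulmx1 ?mul1mx.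
  by rewrite ?addr0 ?add0r QQ' -scalar_mx_block.
have KDK : K^T *m diag_mx (row_mx a%:M D') *m K = B.
  rewrite /K tr_block_mx diag_mx_row !mulmx_block !trmx0 trmx1 ?mulmx0 ?mul0mx ?mulmx1 ?mul1mx.
  rewrite ?addr0 ?add0r -[RHS]submxK ul ur dl -/A' AQ' mul0mx; congr block_mx.
  by apply/matrixP => i j; rewrite !ord1 !mxE.
exists (K *m H), (row_mx a%:M D'); split.
  by rewrite trmx_mul mulmxA -(mulmxA K) HH mulmx1 KK.
rewrite trmx_mul mulmxA -(mulmxA H^T) -(mulmxA H^T) KDK /B.
by rewrite !mulmxA HtH mul1mx -mulmxA HtH mulmx1.
Qed.
End Spec.

Set Implicit Arguments. Unset Strict Implicit.
Section Spd.
Variable R : realType.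
Implicit Types n : nat.

Lemma quad_diag n (D : 'rV[R]_n) (w : 'cV[R]_n) :
  (w^T *m diag_mx D *m w) 0 0 = \sum_j D 0 j * w j 0 ^+ 2.
Proof.
rewrite mul_mx_diag mxE; apply: eq_bigr => j _; rewrite !mxE mulrAC mulrC expr2; reflexivity.
Qed.

Lemma spd_psd n (A : 'M[R]_n) : spd A -> forall v : 'cV[R]_n, 0 <= (v^T *m A *m v) 0 0.
Proof.
move=> [_ pA] v; have [->|vN0] := eqVneq v 0.
  by rewrite mulmx0 mxE.
exact: ltW (pA v vN0).
Qed.

Lemma spd_unit n (A : 'M[R]_n) : spd A -> A \in unitmx.
Proof.
move=> [sA pA]; rewrite unitmxE unitfE; apply/negP => /det0P [v vN0 vA].
have : v^T != 0 by apply: contra vN0 => /eqP/(congr1 trmx); rewrite trmxK trmx0 => ->.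
move=> /pA; by rewrite trmxK vA mul0mx mxE ltxx.
Qed.

Lemma spd_diagE n (Q : 'M[R]_n) (D : 'rV[R]_n) : Q *m Q^T = 1%:M ->
  spd (Q^T *m diag_mx D *m Q) <-> (forall j, 0 < D 0 j).
Proof.
move=> QQ; have QtQ : Q^T *m Q = 1%:M by apply: mulmx1C.
split.
  move=> [_ pA] j.
  pose v := (row j Q)^T.
  have vE : v^T *m Q^T = row j 1%:M by rewrite /v trmxK -row_mul QQ.
  have vN0 : v != 0.
    apply/eqP => v0; have := congr1 (fun M : 'rV__ => M 0 j) vE.
    by rewrite v0 trmx0 mul0mx !mxE eqxx /= => /eqP; rewrite eq_sym oner_eq0.
  have := pA v vN0.
  have Qv : Q *m v = (row j 1%:M)^T by rewrite -vE trmx_mul !trmxK.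
  move=> H; rewrite !mulmxA vE -mulmxA Qv -[row j 1%:M in X in X *m _]trmxK quad_diag in H; move: H.
  rewrite (bigD1 j) //= big1 ?addr0 => [|k kj]; rewrite !mxE ?eqxx /=.
    by rewrite expr1n mulr1.
  by rewrite eq_sym (negbTE kj) expr0n mulr0.
move=> Dp; split.
  by rewrite /symmx !trmx_mul trmxK tr_diag_mx mulmxA.
move=> v vN0; rewrite !mulmxA -(mulmxA _ Q) (_ : v^T *m Q^T = (Q *m v)^T) ?quad_diag; last by rewrite trmx_mul.
have wN0 : Q *m v != 0.
  apply: contra vN0 => /eqP w0; apply/eqP.
  by rewrite -[v]mul1mx -QtQ -mulmxA w0 mulmx0.
rewrite lt_def sumr_ge0 ?andbT; last by move=> j _; rewrite mulr_ge0 ?sqr_ge0 // ltW.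
rewrite psumr_eq0; last by move=> j _; rewrite mulr_ge0 ?sqr_ge0 // ltW.
apply: contra wN0 => /allP H; apply/eqP/matrixP => j i; rewrite ord1 [RHS]mxE.
have := H j (mem_index_enum j); rewrite /= mulf_eq0 gt_eqF //= sqrf_eq0 => /eqP ->.
by [].
Qed.

Lemma spd_congr n (A P : 'M[R]_n) : spd A -> P \in unitmx -> spd (P^T *m A *m P).
Proof.
move=> [sA pA] uP; split.
  by rewrite /symmx !trmx_mul trmxK sA mulmxA.
move=> v vN0; have wN0 : P *m v != 0.
  apply: contra vN0 => /eqP w0; apply/eqP.
  by rewrite -[v]mul1mx -(mulVmx uP) -mulmxA w0 mulmx0.
have := pA _ wN0; by rewrite trmx_mul !mulmxA.
Qed.

Lemma diag_shift n (Q : 'M[R]_n) (D : 'rV[R]_n) (a : R) : Q^T *m Q = 1%:M ->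
  Q^T *m diag_mx (\row_j (D 0 j + a)) *m Q = Q^T *m diag_mx D *m Q + a *: 1%:M.
Proof.
move=> QtQ.
have -> : diag_mx (\row_j (D 0 j + a)) = diag_mx D + a%:M.
  apply/matrixP => i j; rewrite !mxE; case: (i == j); by rewrite ?mulr1n ?mulr0n ?addr0.
by rewrite mulmxDr mulmxDl mul_mx_scalar -scalemxAl QtQ.
Qed.

Lemma diag_sq n (Q : 'M[R]_n) (D : 'rV[R]_n) : Q *m Q^T = 1%:M ->
  (Q^T *m diag_mx D *m Q) *m (Q^T *m diag_mx D *m Q) =
  Q^T *m diag_mx (\row_j (D 0 j ^+ 2)) *m Q.
Proof.
move=> QQ; rewrite -!mulmxA (mulmxA Q) QQ mul1mx (mulmxA (diag_mx D)) mulmx_diag.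
by congr (_ *m (diag_mx _ *m _)); apply/rowP => j; rewrite !mxE expr2.
Qed.

Lemma sqrt_exists n (A : 'M[R]_n) : spd A -> exists S, spd S /\ S *m S = A.
Proof.
move=> spA; have [Q [D [QQ AE]]] := @spectral R _ _ spA.1.
have Dp : forall j, 0 < D 0 j by apply/(@spd_diagE n Q _ QQ); rewrite -AE.
exists (Q^T *m diag_mx (\row_j Num.sqrt (D 0 j)) *m Q); split.
  by apply/(@spd_diagE n Q _ QQ) => j; rewrite mxE sqrtr_gt0.
rewrite diag_sq // AE; congr (_ *m diag_mx _ *m _); apply/rowP => j.
by rewrite !mxE sqr_sqrtr // ltW.
Qed.

Lemma sqrtmxP n (A : 'M[R]_n) : spd A -> spd (sqrtmx A) /\ sqrtmx A *m sqrtmx A = A.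
Proof. by move=> spA; rewrite /sqrtmx; have := @xgetPex _ 0 [set S | spd S /\ S *m S = A] (sqrt_exists spA). Qed.

Lemma tr_quad n (B M : 'M[R]_n) :
  \tr (B^T *m M *m B) = \sum_i ((col i B)^T *m M *m col i B) 0 0.
Proof.
apply: eq_bigr => i _; rewrite !mxE; apply: eq_bigr => k _; rewrite !mxE.
by congr (_ * _); apply: eq_bigr => l _; rewrite !mxE.
Qed.

Lemma spd_sq_inj n (S T : 'M[R]_n) : spd S -> spd T -> S *m S = T *m T -> S = T.
Proof.
move=> pS pT ST; pose D := S - T.
have DT : D^T = D by rewrite /D linearB /= pS.1 pT.1.
have E : S *m D + D *m T = 0.
  by rewrite /D mulmxBr mulmxBl ST addrC addrA subrK subrr.
have E2 : \tr (D^T *m S *m D) + \tr (D^T *m T *m D) = 0.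
  have -> : \tr (D^T *m S *m D) = \tr (S *m D *m D).
    by rewrite [RHS]mxtrace_mulC mulmxA DT.
  by rewrite DT -mxtraceD -mulmxDl E mul0mx mxtrace0.
have t1 : 0 <= \tr (D^T *m S *m D).
  by rewrite tr_quad sumr_ge0 // => i _; apply: spd_psd.
have t2 : 0 <= \tr (D^T *m T *m D).
  by rewrite tr_quad sumr_ge0 // => i _; apply: spd_psd.
have t0 : \tr (D^T *m T *m D) == 0 by apply/eqP; lra.
move: t0; rewrite tr_quad psumr_eq0; last by move=> i _; apply: spd_psd.
move=> /allP H; apply/eqP; rewrite -subr_eq0 -/D; apply/eqP/matrixP => i j.
have := H j (mem_index_enum j); rewrite implyTb => /eqP Hj.
have : col j D = 0.
  apply/eqP; apply: contraLR isT => cN0.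
  by have := pT.2 _ cN0; rewrite Hj ltxx.
by move=> /(congr1 (fun M : 'cV__ => M i 0)); rewrite !mxE.
Qed.
End Spd.

Section Main.
Variable R : realType.

Lemma spd_add_scalar n (K : 'M[R]_n) (a : R) : spd K -> 0 <= a -> spd (K + a%:M).
Proof.
move=> [sK pK] a0; split; first by rewrite /symmx linearD /= sK tr_scalar_mx.
move=> v vN0; rewrite mulmxDr mulmxDl entryD mul_mx_scalar -scalemxAl entryZ.
have h1 := pK v vN0.
have h2 : 0 <= a * (v^T *m v) 0 0 by rewrite mulr_ge0 // -{2}[v]trmxK normsq_ge0.
lra.
Qed.

Lemma sq_shift n (r : 'M[R]_n) (a : R) :
  (r + a%:M) *m (r + a%:M) = r *m r + (2 * a) *: r + (a ^+ 2)%:M.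
Proof.
rewrite mulmxDl !mulmxDr mul_mx_scalar mul_scalar_mx -scalar_mxM.
move: (r *m r) => P; apply/matrixP => i j; rewrite !mxE.
case: (i == j); rewrite ?mulr1n ?mulr0n; ring.
Qed.

Lemma spd_shift n (r : 'M[R]_n) (c : R) : spd r -> 0 < c ->
  spd (r *m r - (c ^+ 2)%:M) -> spd (r - c%:M).
Proof.
move=> pr c0 pK.
have [Q [D [QQ rE]]] := @spectral R _ _ pr.1.
have QtQ : Q^T *m Q = 1%:M by apply: mulmx1C.
have Dp : forall j, 0 < D 0 j by apply/(spd_diagE D QQ); rewrite -rE.
have E1 : r *m r - (c ^+ 2)%:M = Q^T *m diag_mx (\row_j ((\row_k (D 0 k ^+ 2)) 0 j + - c ^+ 2)) *m Q.
  by rewrite diag_shift // -diag_sq // -rE scaleNr scalemx1.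
have E2 : r - c%:M = Q^T *m diag_mx (\row_j (D 0 j + - c)) *m Q.
  by rewrite diag_shift // -rE scaleNr scalemx1.
move: pK; rewrite E1 E2 !(spd_diagE _ QQ) => H j.
have := H j; have := Dp j; rewrite !mxE => h1 h2; nra.
Qed.

Lemma entry0 m n (i : 'I_m) (j : 'I_n) : (0 : 'M[R]_(m, n)) i j = 0.
Proof. by rewrite mxE. Qed.

Lemma inv_sym n (s : 'M[R]_n) : s^T = s -> (invmx s)^T = invmx s.
Proof. by move=> ss; rewrite trmx_inv ss. Qed.

End Main.

Unset Implicit Arguments. Set Strict Implicit.

Theorem proposition1 (R : realType) (d : nat) (S1 S2 : 'M[R]_d) (eps : R) :
  spd S1 -> spd S2 -> 0 < eps ->
  let X := Xeps S1 S2 eps in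
  [/\ spd X,
      X *m S1 *m X + (eps / 2) *: X = S2,
      (forall Y : 'M[R]_d, spd Y -> Y *m S1 *m Y + (eps / 2) *: Y = S2 -> Y = X),
      spd (Sigeps S1 S2 eps) &
      invmx (Sigeps S1 S2 eps) =
        block_mx (invmx S1 + (2 / eps) *: X) (- (2 / eps) *: 1%:M)
                 (- (2 / eps) *: 1%:M) ((2 / eps) *: invmx X)].
Proof.
move=> pS1 pS2 e0 X.
have [ps ss] := sqrtmxP pS1.
set s := sqrtmx S1 in ps ss.
have us : s \in unitmx := spd_unit ps.
set si := invmx s.
have siT : si^T = si := inv_sym ps.1.
have usi : si \in unitmx by rewrite unitmx_inv.
have sis : si *m s = 1%:M by apply: mulVmx.
have ssi : s *m si = 1%:M by apply: mulmxV.
have S1i : invmx S1 = si *m si.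
  have uS1 : S1 \in unitmx := spd_unit pS1.
  rewrite -[RHS](mulKmx uS1) -ss -!mulmxA (mulmxA s si) ssi mul1mx ssi mulmx1.
  by [].
set c := eps / 4.
have c0 : 0 < c by rewrite /c divr_gt0.
set K := s *m S2 *m s.
have pK : spd K by have := spd_congr pS2 us; rewrite ps.1.
set M := K + c ^+ 2 *: 1%:M.
have pM : spd M by rewrite /M scalemx1; apply: spd_add_scalar => //; rewrite sqr_ge0.
have [pr rr] := sqrtmxP pM.
set r := sqrtmx M in pr rr.
set N := r - c%:M.
have pN : spd N.
  apply: spd_shift => //; rewrite rr /M scalemx1 addrK //.
have XE : X = si *m N *m si.
  rewrite /X /Xeps -/s -/si -/K -/c -/M -/r /N S1i.
  by rewrite mulmxBr mulmxBl mul_mx_scalar -scalemxAl.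
have pX : spd X by rewrite XE; have := spd_congr pN usi; rewrite siT.
have KE : K = r *m r - (c ^+ 2)%:M by rewrite rr /M scalemx1 addrK.
have NN : N *m N + (eps / 2) *: N = K.
  rewrite KE /N mulmxBl !mulmxBr mul_mx_scalar mul_scalar_mx -scalar_mxM.
  move: (r *m r) => P; apply/matrixP => i j; rewrite !mxE /c.
  by case: (i == j); rewrite ?mulr1n ?mulr0n; field.
have eqX : X *m S1 *m X + (eps / 2) *: X = S2.
  rewrite XE -ss !mulmxA -(mulmxA _ si s) sis mulmx1 -(mulmxA _ s si) ssi mulmx1.
  rewrite -(mulmxA si N N) scalemxAl -mulmxDl scalemxAr -mulmxDr NN.
  by rewrite /K !mulmxA sis mul1mx -mulmxA ssi mulmx1.
have uniq : forall Y : 'M[R]_d, spd Y -> Y *m S1 *m Y + (eps / 2) *: Y = S2 -> Y = X.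
  move=> Y pY eY.
  pose Z := s *m Y *m s.
  have pZ : spd Z by have := spd_congr pY us; rewrite ps.1.
  have pZc : spd (Z + c%:M) by apply: spd_add_scalar => //; apply: ltW.
  have sqZ : (Z + c%:M) *m (Z + c%:M) = M.
    rewrite sq_shift /M scalemx1; congr (_ + _).
    have -> : 2 * c = eps / 2 by rewrite /c; field.
    rewrite /K -eY /Z mulmxDr mulmxDl; congr (_ + _).
      by rewrite -ss !mulmxA.
    by rewrite -scalemxAr -scalemxAl.
  have Zr : Z + c%:M = r by apply: spd_sq_inj => //; rewrite sqZ rr.
  have ZN : Z = N by rewrite /N -Zr addrK.
  by rewrite XE -ZN /Z !mulmxA sis mul1mx -mulmxA ssi mulmx1.
have XT : X^T = X := pX.1.
have S1T : S1^T = S1 := pS1.1.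
have S2T : S2^T = S2 := pS2.1.
have pSig : spd (Sigeps S1 S2 eps).
  split.
    by rewrite /symmx /Sigeps tr_block_mx !trmx_mul XT S1T S2T.
  move=> v vN0; rewrite /Sigeps -/X; clearbody X.
  move: vN0; rewrite -[v]vsubmxK.
  move: (usubmx v) (dsubmx v) => a b vN0.
  rewrite tr_col_mx mul_row_block mul_row_col -eqX.
  have -> : ((a^T *m S1 + b^T *m (X *m S1)) *m a +
            (a^T *m (S1 *m X) + b^T *m (X *m S1 *m X + (eps / 2) *: X)) *m b) 0 0
          = ((a + X *m b)^T *m S1 *m (a + X *m b)) 0 0 + eps / 2 * (b^T *m X *m b) 0 0.
    have -> : (a + X *m b)^T = a^T + (X *m b)^T by apply/matrixP => i j; rewrite !mxE.
    rewrite trmx_mul XT.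
    rewrite !mulmxDl !mulmxDr -!scalemxAr ?scalemxAl !mulmxA.
    rewrite !mulmxDl -!scalemxAl !entryD !entryZ.
    have -> : (b^T *m X *m S1 *m a) 0 0 = (a^T *m S1 *m X *m b) 0 0.
      have -> : (b^T *m X *m S1 *m a) 0 0 = (b^T *m X *m S1 *m a)^T 0 0 by rewrite [RHS]mxE.
      by rewrite !trmx_mul trmxK XT S1T !mulmxA.
    ring.
  have h1 := spd_psd pS1 (a + X *m b).
  have [b0|bN0] := eqVneq b 0.
    have aN0 : a != 0 by apply: contra vN0 => /eqP ->; rewrite b0 col_mx0.
    rewrite b0 mulmx0 addr0 mulmx0 entry0 mulr0 addr0; exact: pS1.2.
  have h2 := pX.2 b bN0.
  have h3 : 0 < eps / 2 by rewrite divr_gt0.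
  nra.
have uX : X \in unitmx := spd_unit pX.
have uS1 : S1 \in unitmx := spd_unit pS1.
have E : Sigeps S1 S2 eps *m block_mx (invmx S1 + (2 / eps) *: X) (- (2 / eps) *: 1%:M)
                 (- (2 / eps) *: 1%:M) ((2 / eps) *: invmx X) = 1%:M.
  rewrite /Sigeps -/X; clearbody X.
  rewrite mulmx_block (scalar_mx_block d d 1); congr block_mx.
  - by rewrite mulmxDr mulmxV // -scalemxAr scalemx1 mul_mx_scalar scaleNr addrK.
  - by rewrite -!scalemxAr mulmx1 -mulmxA mulmxV // mulmx1 scaleNr addNr.
  - rewrite -eqX mulmxDr -mulmxA mulmxV // mulmx1 -!scalemxAr !mulmx1.
    apply/matrixP => i j; rewrite !entryD !entryZ entryD entryZ entry0.
    field; by rewrite gt_eqF.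
  - rewrite -eqX -!scalemxAr !mulmx1 mulmxDl -scalemxAl -!mulmxA mulmxV // !mulmx1.
    apply/matrixP => i j; rewrite !entryD !entryZ entryD entryZ.
    field; by rewrite gt_eqF.
have uSig : Sigeps S1 S2 eps \in unitmx by case: (mulmx1_unit E).
split => //.
by rewrite -[RHS](mulKmx uSig) E mulmx1.
Qed.
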